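(* Let $n\ge 1$, $m\ge1$ and $W=A_{n-1}$. Then $$\sum_{R}q^{\operatorname{coh}(R)}=\sum_{D\in\mathcal{D}^{(m)}_n}q^{\operatorname{area}(D)},$$ where $R$ ranges over the positive regions of the extended Shi arrangement $\mathsf{Shi}^{(m)}(A_{n-1})$.
   Context: For a crystallographic reflection group $W$ acting on a real Euclidean space $V$ with root system $\Phi$ and positive roots $\Phi^+$ ($N=|\Phi^+|$), the extended Shi arrangement $\mathsf{Shi}^{(m)}(W)$ consists of the hyperplanes $H^{(k)}_\alpha=\{x:(\alpha,x)=k\}$ for $\alpha\in\Phi^+$, $-m<k\le m$. A region is a connected component of the complement of these hyperplanes; it is positive if it lies in the fundamental chamber $\{x:(\alpha,x)>0\ \forall\alpha\in\Phi^+\}$. Let $R^0=\{x:0<(\alpha,x)<1\ \forall\alpha\in\Phi^+\}$; the height of a region $R$ is the number of hyperplanes of $\mathsf{Shi}^{(m)}(W)$ separating $R$ from $R^0$, and $\operatorname{coh}(R)=mN-\operatorname{height}(R)$. For $A_{n-1}$, $\Phi^+=\{e_j-e_i:1\le i<j\le n\}$ in $\{x\in\mathbb{R}^n:\sum x_i=0\}$. $\mathcal{D}^{(m)}_n$ is the set of $m$-Dyck paths of semilength $n$: north-east lattice paths from $(0,0)$ to $(mn,n)$ (unit north and east steps) staying weakly above the line $x=my$; $\operatorname{area}(D)$ is the number of full unit lattice squares lying between $D$ and the line $x=my$. *)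

(* Defs.v *)
From HB Require Import structures.
From mathcomp Require Import all_boot all_order all_algebra.
From Stdlib Require Import ClassicalEpsilon.
Set Implicit Arguments. Unset Strict Implicit. Unset Printing Implicit Defensive.
Import Order.TTheory GRing.Theory Num.Theory.

Definition propb (P : Prop) : bool :=
  if excluded_middle_informative P then true else false.

(* Positive roots e_j - e_i, 1 <= i < j <= n, encoded as pairs (i,j) with i<j. *)
Definition proot (n : nat) := {p : 'I_n * 'I_n | p.1 < p.2}.

Local Open Scope ring_scope.

Definition rootpair (R : realFieldType) (n : nat) (a : proot n) (x : 'I_n -> R) : R :=
  x (val a).2 - x (val a).1.

Definition inV (R : realFieldType) (n : nat) (x : 'I_n -> R) : Prop :=
  \sum_(i < n) x i = 0.

(* Hyperplanes of Shi^(m): H_alpha^k, alpha positive, -m < k <= m.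
   Index h : 'I_(2m) encodes k = h + 1 - m. *)
Definition hlevel (R : realFieldType) (m : nat) (h : 'I_(m.*2)) : R :=
  (h.+1)%:R - m%:R.

(* For each positive root alpha, the 2m parallel hyperplanes H_alpha^k cut the
   line of values of (alpha,x) into 2m+1 open intervals, indexed by
   c : 'I_(2m+1): interval c is  (c - m, c + 1 - m), where the lower bound is
   -infinity for c = 0 and the upper bound is +infinity for c = 2m.
   A "cell" is a choice of such an interval for every positive root; the points
   of V in cell c are those x with (alpha,x) in interval (c alpha) for all alpha. *)
Definition cellidx (n m : nat) := {ffun proot n -> 'I_(m.*2.+1)}.

Definition in_interval (R : realFieldType) (m : nat) (c : 'I_(m.*2.+1)) (v : R) : Prop :=
  ((c : nat) = 0%N \/ (c%:R - m%:R < v)) /\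
  ((c : nat) = m.*2 \/ (v < c.+1%:R - m%:R)).

Definition in_cell (R : realFieldType) (n m : nat) (c : cellidx n m) (x : 'I_n -> R) : Prop :=
  inV x /\ forall a : proot n, in_interval (c a) (rootpair a x).
Arguments in_cell R {n m} c x.

(* The regions of Shi^(m) (connected components of V minus the hyperplanes) are
   exactly the nonempty cells; each region corresponds to a unique index c. *)
Definition is_region (R : realFieldType) (n m : nat) (c : cellidx n m) : Prop :=
  exists x, in_cell R c x.

Definition is_pos_region (R : realFieldType) (n m : nat) (c : cellidx n m) : Prop :=
  is_region R c /\
  forall x, in_cell R c x -> forall a : proot n, 0 < rootpair a x.

(* R^0 = {x : 0 < (alpha,x) < 1 for all alpha}: the cell with all intervals (0,1),
   i.e. index m. *)
Definition c0 (n m : nat) : cellidx n m := [ffun _ => inord m].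

Definition separates (R : realFieldType) (n m : nat) (c c' : cellidx n m)
    (H : proot n * 'I_(m.*2)) : Prop :=
  exists x y, in_cell R c x /\ in_cell R c' y /\
    ((rootpair H.1 x < hlevel R H.2 < rootpair H.1 y) \/
     (rootpair H.1 y < hlevel R H.2 < rootpair H.1 x)).

Definition height (R : realFieldType) (n m : nat) (c : cellidx n m) : nat :=
  #|[set H : proot n * 'I_(m.*2) | propb (separates R c (c0 n m) H)]|.

Definition coh (R : realFieldType) (n m : nat) (c : cellidx n m) : nat :=
  (m * #|{: proot n}| - height R c)%N.

(* A path is a word of steps: true = north step (0,1), false = east step (1,0). *)

(* Number of east steps before the (b+1)-th north step: the x-coordinate of
   the path in the row y in [b, b+1]. *)
Fixpoint east_before (s : seq bool) (b : nat) : nat :=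
  match s with
  | [::] => 0%N
  | true :: s' => if b is b'.+1 then east_before s' b' else 0%N
  | false :: s' => (east_before s' b).+1
  end.

Definition dyckb (m n : nat) (D : seq bool) : bool :=
  [&& size D == (m * n + n)%N, count id D == n,
      count negb D == (m * n)%N &
      [forall k : 'I_(size D).+1,
         count negb (take k D) <= m * count id (take k D)]]%N.

(* area(D): number of full unit squares [a,a+1]x[b,b+1] lying between D and the
   line x = m y: to the right of the path (a >= east_before D b) and to the left
   of the line (a + 1 <= m b). *)
Definition area (m n : nat) (D : seq bool) : nat :=
  (\sum_(b < n) \sum_(a < m * n) ((east_before D b <= a) && (a.+1 <= m * b)))%N.

(* Main.v *)
Require Import Defs.
From HB Require Import structures.
From mathcomp Require Import all_boot all_order all_algebra.
From mathcomp Require Import zify ring lra.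
From Stdlib Require Import ClassicalEpsilon.
Set Implicit Arguments. Unset Strict Implicit. Unset Printing Implicit Defensive.
Import Order.TTheory GRing.Theory Num.Theory.

Fixpoint wordE (E : nat -> nat) (p n T : nat) : seq bool :=
  match n with
  | 0 => nseq (T - p) false
  | n'.+1 => nseq (E 0 - p) false ++ true :: wordE (fun i => E i.+1) (E 0) n' T
  end.

Fixpoint monoE (E : nat -> nat) (p n T : nat) : Prop :=
  match n with
  | 0 => p <= T
  | n'.+1 => p <= E 0 /\ monoE (fun i => E i.+1) (E 0) n' T
  end.

Lemma monoE_intro n : forall E p T,
  (forall i j, i <= j -> j < n -> E i <= E j) ->
  (forall i, i < n -> p <= E i) -> (forall i, i < n -> E i <= T) -> p <= T ->
  monoE E p n T.
Proof.
elim: n => [|n IH] E p T Hm Hp HT HpT //=.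
split; first exact: Hp.
apply: IH => [i j ij jn|i iN|i iN|].
- by apply: Hm => //; lia.
- by apply: Hm => //; lia.
- by apply: HT.
- by apply: HT.
Qed.

Lemma eq_wordE n : forall E E' p T, (forall i, i < n -> E i = E' i) ->
  wordE E p n T = wordE E' p n T.
Proof.
elim: n => [|n IH] E E' p T H //=.
rewrite H // (IH (fun i => E i.+1) (fun i => E' i.+1)) // => i iN; apply: H; lia.
Qed.

Lemma monoE_le n : forall E p T, monoE E p n T -> p <= T.
Proof.
elim: n => [|n IH] E p T //= [H1 H2]; have := IH _ _ _ H2; lia.
Qed.

Lemma size_wordE n : forall E p T, monoE E p n T -> size (wordE E p n T) = (T - p + n)%N.
Proof.
elim: n => [|n IH] E p T /=; first by rewrite size_nseq addn0.
move=> [H1 H2]; rewrite size_cat size_nseq /= IH //.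
have := monoE_le H2; lia.
Qed.

Lemma monoE_ge n : forall E p T i, monoE E p n T -> i < n -> p <= E i.
Proof.
elim: n => [|n IH] E p T i //= [H1 H2]; case: i => [|i] // iN.
have := IH _ _ _ i H2 iN; lia.
Qed.

Lemma eb_nseq d s b : east_before (nseq d false ++ s) b = (d + east_before s b)%N.
Proof. by elim: d => //= d ->. Qed.

Lemma eb_wordE n : forall E p T i, monoE E p n T -> i < n ->
  east_before (wordE E p n T) i = (E i - p)%N.
Proof.
elim: n => [|n IH] E p T i //= [H1 H2] iN.
rewrite eb_nseq; case: i iN => [|i] iN /=; first by rewrite addn0.
rewrite IH //; have := monoE_ge H2 iN; lia.
Qed.

Lemma count_wordE n : forall E p T, monoE E p n T ->
  count id (wordE E p n T) = n /\ count negb (wordE E p n T) = (T - p)%N.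
Proof.
elim: n => [|n IH] E p T /=.
  by move=> _; rewrite !count_nseq /=; split; lia.
move=> [H1 H2]; rewrite !count_cat !count_nseq /=.
have [-> ->] := IH _ _ _ H2; have := monoE_le H2; split; lia.
Qed.

Definition pref (m : nat) (s : seq bool) (E0 N0 : nat) : Prop :=
  forall k, (E0 + count negb (take k s) <= m * (N0 + count id (take k s)))%N.

Lemma pref_nseq m d s E0 N0 :
  pref m (nseq d false ++ s) E0 N0 <-> (E0 + d <= m * N0)%N /\ pref m s (E0 + d) N0.
Proof.
split.
- move=> H; split.
    have := H d; rewrite take_cat size_nseq ltnn subnn take0 cats0
      !count_nseq /=; lia.
  move=> k; have := H (d + k)%N.
  rewrite take_cat size_nseq ltnNge leq_addr /= addKn !count_cat !count_nseq /=; lia.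
- move=> [H1 H2] k; rewrite take_cat size_nseq.
  case: ltnP => kd.
    rewrite take_nseq ?count_nseq /=; lia.
  have := H2 (k - d)%N; rewrite !count_cat !count_nseq /=; lia.
Qed.

Lemma pref_true m s E0 N0 :
  pref m (true :: s) E0 N0 <-> (E0 <= m * N0)%N /\ pref m s E0 N0.+1.
Proof.
split.
- move=> H; split; first by have := H 0%N; rewrite take0 /=; lia.
  move=> k; have := H k.+1 => /=; lia.
- move=> [H1 H2] [|k] /=; first by rewrite /=; lia.
  by have := H2 k; lia.
Qed.

Lemma pref_wordE m n : forall E p T N0, monoE E p n T ->
  pref m (wordE E p n T) p N0 <->
  ((forall i, i < n -> E i <= m * (N0 + i)) /\ T <= m * (N0 + n))%N.
Proof.
elim: n => [|n IH] E p T N0 /=.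
  move=> HpT; rewrite -(cats0 (nseq _ _)) pref_nseq; split.
    move=> [H1 _]; split => //; rewrite addn0; lia.
  move=> [_ H]; split; first by rewrite addn0 in H; lia.
  by move=> k /=; lia.
move=> [H1 H2]; rewrite pref_nseq pref_true.
have -> : (p + (E 0 - p) = E 0)%N by lia.
rewrite IH //; split.
- move=> [_ [H3 [H4 H5]]]; split; last by rewrite addnS -addSn.
  move=> [|i] iN; first by rewrite addn0.
  by have := H4 i iN; rewrite addnS -addSn.
- move=> [H3 H4]; have := H3 0%N isT; rewrite addn0 => H0.
  split => //; split => //; split; last by rewrite addSn -addnS.
  by move=> i iN; rewrite addSn -addnS; apply: H3.
Qed.

Lemma wordE_eb s : forall n p, count id s = n ->
  wordE (fun i => p + east_before s i)%N p n (p + count negb s) = s.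
Proof.
elim: s => [|b s IH] n p /=.
  by move=> <- /=; rewrite addn0 subnn.
case: b => /= Hc.
  rewrite add1n in Hc; subst n => /=; rewrite addn0 subnn /= add0n.
  congr (_ :: _); exact: IH.
rewrite add0n in Hc; case: n Hc => [|n] Hc /=.
  rewrite -[X in _ = _ :: X](IH 0%N p.+1 Hc) /=.
  have -> : (p + (1 + count negb s) - p = (p.+1 + count negb s - p.+1).+1)%N by lia.
  by [].
rewrite -[X in _ = _ :: X](IH n.+1 p.+1 Hc) /=.
have -> : (p + (east_before s 0).+1 - p = (p.+1 + east_before s 0 - p.+1).+1)%N by lia.
rewrite /=; congr (_ :: _ ++ _ :: _).
have -> : (p + (east_before s 0).+1 = p.+1 + east_before s 0)%N by lia.
have -> : (p + (1 + count negb s) = p.+1 + count negb s)%N by lia.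
apply: eq_wordE => i _; lia.
Qed.

Lemma eb_mono s : forall b b', b <= b' -> east_before s b <= east_before s b'.
Proof.
elim: s => [|x s IH] b b' bb //=; case: x.
  case: b bb => [|b] //; case: b' => [|b'] //= bb; exact: IH.
exact: IH.
Qed.

Lemma eb_le s b : east_before s b <= count negb s.
Proof.
elim: s b => [|x s IH] b //=; case: x => /=.
  case: b => [|b] //; rewrite add0n; exact: IH.
by rewrite add1n ltnS.
Qed.

Lemma sum_ind_interval N x y :
  (\sum_(a < N) ((x <= a) && (a < y)))%N = (minn y N - x)%N.
Proof.
elim: N => [|N IH]; first by rewrite big_ord0; lia.
rewrite big_ord_recr /= IH.
case: (leqP x N) => xN; case: (ltnP N y) => Ny /=; lia.
Qed.

Lemma dyck_prefE m D :
  [forall k : 'I_(size D).+1,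
         count negb (take k D) <= m * count id (take k D)]%N <-> pref m D 0 0.
Proof.
split.
- move/forallP => H k; rewrite !add0n.
  case: (leqP k (size D)) => kD.
    by have := H (Ordinal (n:=(size D).+1) (m:=k) kD).
  rewrite take_oversize; last exact: ltnW.
  have := H ord_max; rewrite /= take_size //.
- move=> H; apply/forallP => k; have := H k; rewrite !add0n //.
Qed.

Lemma dyck_wordE m n E :
  (forall i j, i <= j -> j < n -> E i <= E j) ->
  (forall i, i < n -> E i <= m * i)%N ->
  dyckb m n (wordE E 0 n (m * n)).
Proof.
move=> Hm Hb.
have HM : monoE E 0 n (m * n).
  apply: monoE_intro => // i iN; have := Hb i iN.
  move=> h; apply: (leq_trans h); rewrite leq_mul2l ltnW ?orbT //.
have [Hc1 Hc2] := count_wordE HM.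
apply/and4P; split.
- by rewrite size_wordE // subn0.
- by rewrite Hc1.
- by rewrite Hc2 subn0.
- apply/dyck_prefE; apply/pref_wordE => //; split => [i iN|]; rewrite ?add0n //.
Qed.

Lemma dyck_profile m n D : dyckb m n D ->
  [/\ (forall i j, i <= j -> east_before D i <= east_before D j),
      (forall i, i < n -> east_before D i <= m * i)%N &
      wordE (east_before D) 0 n (m * n) = D].
Proof.
case/and4P => /eqP Hs /eqP Hc1 /eqP Hc2 /dyck_prefE Hp.
have HM : monoE (east_before D) 0 n (m * n).
  apply: monoE_intro => // [i j ij _|i _]; first exact: eb_mono.
  by rewrite -Hc2 eb_le.
have Hw := wordE_eb 0 Hc1; rewrite add0n Hc2 in Hw.
have Hw' : wordE (east_before D) 0 n (m * n) = D.
  by rewrite -[RHS]Hw; apply: eq_wordE.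
split => //; first exact: eb_mono.
rewrite -Hw' in Hp; have [H _] := (pref_wordE m 0 HM).1 Hp.
by move=> i iN; have := H i iN; rewrite add0n.
Qed.

Lemma area_eb m n D : (forall i, i < n -> east_before D i <= m * i)%N ->
  area m n D = (\sum_(b < n) (m * b - east_before D b))%N.
Proof.
move=> H; rewrite /area; apply: eq_bigr => b _.
rewrite sum_ind_interval.
have : (m * b <= m * n)%N by rewrite leq_mul2l ltnW ?orbT.
lia.
Qed.

Lemma sum_proot n (F : 'I_n * 'I_n -> nat) :
  (\sum_(a : proot n) F (val a) = \sum_(p : 'I_n * 'I_n | p.1 < p.2) F p)%N.
Proof.
rewrite (reindex_omap (val : proot n -> _) insub); last first.
  by move=> i Pi; rewrite insubT.
by apply: eq_bigl=> -[i iA]/=; rewrite insubT ?iA /= ?eqxx ?andbT.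
Qed.

Lemma card_sum (T : finType) (P : pred T) : #|[set x | P x]| = (\sum_x P x)%N.
Proof.
rewrite -sum1dep_card big_mkcond /=; apply: eq_bigr => x _; by case: (P x).
Qed.

Definition kk n m (c : cellidx n m) (i j : 'I_n) : nat :=
  oapp (fun a : proot n => (c a - m)%N) 0%N (insub (i, j)).

Lemma kkE n m (c : cellidx n m) (a : proot n) : kk c (val a).1 (val a).2 = (c a - m)%N.
Proof. by rewrite /kk -surjective_pairing valK. Qed.

Lemma kk0 n m (c : cellidx n m) (i j : 'I_n) : (j <= i)%N -> kk c i j = 0%N.
Proof. by move=> ji; rewrite /kk insubF //= ltnNge ji. Qed.

Lemma propbP (P : Prop) : reflect P (propb P).
Proof. rewrite /propb; case: excluded_middle_informative => h; constructor => //. Qed.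

Lemma card_sum_in (T : finType) (A : {set T}) : #|A| = (\sum_x (x \in A))%N.
Proof. by rewrite -sum1_card big_mkcond; apply: eq_bigr => x _; case: (x \in A). Qed.

Lemma subn_inj_helper m u v : (m <= u)%N -> (m <= v)%N -> (u - m = v - m)%N -> u = v.
Proof. lia. Qed.

Section Geo.
Variables (R : realFieldType) (n m : nat).
Hypothesis hm : (1 <= m)%N.
Local Open Scope ring_scope.

Lemma cell_facts (c : cellidx n m) (x : 'I_n -> R) (a : proot n) :
  in_cell R c x -> (m <= c a)%N ->
  forall s : nat, (1 <= s <= m)%N ->
    (s%:R < rootpair a x) = (s <= c a - m)%N /\ rootpair a x != s%:R.
Proof.
move=> [_ H] cm s /andP[s1 sm]; have [H1 H2] := H a.
have ca := ltn_ord (c a).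
set v := rootpair a x in H1 H2 *.
have lo : ((c a - m)%N%:R < v).
  case: H1 => [c0|]; first by move: cm; rewrite c0; lia.
  by rewrite natrB.
case: (leqP s (c a - m)) => sk.
  have : s%:R < v by apply: le_lt_trans lo; rewrite ler_nat.
  by move=> h; split; [|rewrite gt_eqF].
have hi : v < (c a - m).+1%:R.
  case: H2 => [c2|]; first by move: sk sm; rewrite c2; lia.
  move=> h; apply: (lt_le_trans h); rewrite -natrB; last lia.
  by rewrite ler_nat; lia.
have : v < s%:R by apply: lt_le_trans hi _; rewrite ler_nat.
by move=> h; split; [apply/negbTE; rewrite -leNgt ltW | rewrite lt_eqF].
Qed.


Lemma pos_iff (c : cellidx n m) :
  is_pos_region R c <-> (is_region R c /\ forall a, (m <= c a)%N).
Proof.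
split.
- move=> [[x Hx] Hp]; split; first by exists x.
  move=> a; case: (leqP m (c a)) => // ca.
  have := Hp x Hx a; case: Hx => _ /(_ a) [_ H2].
  case: H2 => [c2|]; first by move: ca; rewrite c2; lia.
  move=> h1 h2; have : ((c a).+1%:R - m%:R <= 0 :> R).
    by rewrite subr_le0 ler_nat.
  lra.
- move=> [Hr Hm]; split => // x Hx a.
  case: Hx => _ /(_ a) [[c0|H1] _]; first by move: (Hm a); rewrite c0; lia.
  apply: le_lt_trans H1; rewrite subr_ge0 ler_nat; exact: Hm.
Qed.

Lemma pos_cell_gt0 (c : cellidx n m) x a :
  (forall a, m <= c a)%N -> in_cell R c x -> 0 < rootpair a x.
Proof.
move=> Hm Hx; case: (Hx) => _ /(_ a) [[c0|H1] _]; first by move: (Hm a); rewrite c0; lia.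
apply: le_lt_trans H1; rewrite subr_ge0 ler_nat; exact: Hm.
Qed.

Lemma kk_card (c : cellidx n m) (x : 'I_n -> R) (i j : 'I_n) :
  (forall a, m <= c a)%N -> in_cell R c x -> (i < j)%N ->
  kk c i j = #|[set t : 'I_m | (t.+1)%:R < x j - x i]|.
Proof.
move=> Hm Hx ij.
have [a Ha] : exists a : proot n, val a = (i, j).
  by exists (exist _ (i, j) ij).
have -> : kk c i j = (c a - m)%N by rewrite -kkE Ha.
rewrite card_sum.
have -> : (\sum_(t : 'I_m) ((t.+1)%:R < x j - x i)%R
          = \sum_(t < m) ((0 <= t) && (t < c a - m)))%N.
  apply: eq_bigr => t _.
  have := cell_facts Hx (Hm a) (s := t.+1); rewrite /rootpair Ha /=.
  by move/(_ (ltn_ord t)) => [-> _].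
rewrite sum_ind_interval; have := ltn_ord (c a); lia.
Qed.

Definition center (x : 'I_n -> R) : 'I_n -> R :=
  fun i => x i - (\sum_(k < n) x k) / n%:R.

Lemma center_inV x : (1 <= n)%N -> inV (center x).
Proof.
move=> hn; have nz : n%:R != 0 :> R by rewrite pnatr_eq0 -lt0n.
by rewrite /inV /center sumrB sumr_const card_ord -[(_ / _) *+ n]mulr_natr divfK // subrr.
Qed.

Lemma center_rp x a : rootpair a (center x) = rootpair a x.
Proof. rewrite /rootpair /center; lra. Qed.

Lemma c0_val (a : proot n) : (c0 n m a : nat) = m.
Proof. by rewrite /c0 ffunE inordK //; lia. Qed.

Lemma c0_point : (1 <= n)%N -> exists y, in_cell R (c0 n m) y.
Proof.
move=> hn; exists (center (fun i => (i : nat)%:R / n%:R)); split; first exact: center_inV.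
move=> a; rewrite /in_interval center_rp c0_val /rootpair.
have n0 : (0 < n%:R :> R) by rewrite ltr0n.
have ij := valP a; move: ij; case: (val a) => i j /= ij.
have Hj : (j%:R < n%:R :> R) by rewrite ltr_nat.
have Hij : (i%:R < j%:R :> R) by rewrite ltr_nat.
have Hi : (0 <= i%:R :> R) by rewrite ler0n.
split; right.
- rewrite subrr -mulrBl mulr_gt0 ?subr_gt0 // invr_gt0 //.
- rewrite -addn1 natrD addrAC subrr add0r -mulrBl ltr_pdivrMr // mul1r; lra.
Qed.

Lemma separatesE (c : cellidx n m) H :
  (1 <= n)%N -> (forall a, m <= c a)%N -> is_region R c ->
  separates R c (c0 n m) H <-> (m <= H.2 < c H.1)%N.
Proof.
move=> hn Hm [x Hx]; case: H => a h /=.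
have hlt := ltn_ord h.
have ca := ltn_ord (c a).
rewrite /separates /hlevel.
split.
- move=> [x' [y [Hx' [Hy Hs]]]].
  have px := pos_cell_gt0 a Hm Hx'.
  have [_ /(_ a) [_ Hy2]] := Hy.
  have [_ /(_ a) [Hy1 _]] := Hy.
  rewrite c0_val in Hy1 Hy2.
  have py : 0 < rootpair a y.
    case: Hy1 => [m0|]; first by move: hm; rewrite m0.
    by rewrite subrr.
  have py1 : rootpair a y < 1.
    case: Hy2 => [m2|]; first by move: hm m2; lia.
    by rewrite -addn1 natrD addrAC subrr add0r.
  case: (leqP m h) => mh.
  + have L1 : (1 <= (h.+1)%:R - m%:R :> R).
      by rewrite lerBrDr nat1r ler_nat; lia.
    rewrite /=; case: (ltnP h (c a)) => // cah.
    exfalso.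
    have [_ /(_ a) [_ Hx2]] := Hx'.
    case: Hx2 => [c2|Hx2]; first by move: c2 cah hlt; lia.
    have : ((c a).+1%:R - m%:R <= (h.+1)%:R - m%:R :> R).
      by rewrite lerD2r ler_nat.
    move: Hs; lra.
  + have L0 : ((h.+1)%:R - m%:R <= 0 :> R) by rewrite subr_le0 ler_nat.
    exfalso; move: Hs; lra.
- move=> /andP [mh hc].
  have [y Hy] := c0_point hn.
  exists x, y; split => //; split => //; right.
  have [_ /(_ a) [_ Hy2]] := Hy.
  rewrite c0_val in Hy2.
  have py1 : rootpair a y < 1.
    case: Hy2 => [m2|]; first by move: hm m2; lia.
    by rewrite -addn1 natrD addrAC subrr add0r.
  have L1 : (1 <= (h.+1)%:R - m%:R :> R).
    by rewrite lerBrDr nat1r ler_nat; lia.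
  have [_ /(_ a) [Hx1 _]] := Hx.
  case: Hx1 => [c0'|Hx1]; first by move: (Hm a); rewrite c0'; lia.
  have : ((h.+1)%:R - m%:R <= (c a)%:R - m%:R :> R).
    by rewrite lerD2r ler_nat.
  lra.
Qed.

Lemma height_sum (c : cellidx n m) :
  (1 <= n)%N -> (forall a, m <= c a)%N -> is_region R c ->
  height R c = (\sum_(a : proot n) (c a - m))%N.
Proof.
move=> hn Hm Hr; rewrite /height.
have -> : [set H | propb (separates R c (c0 n m) H)] =
          [set H : proot n * 'I_(m.*2) | (m <= H.2 < c H.1)%N].
  by apply/setP => H; rewrite !inE; apply/propbP/idP => /(separatesE H hn Hm Hr).
rewrite card_sum.
transitivity (\sum_a \sum_(h : 'I_(m.*2)) (m <= h < c a))%N; first by rewrite pair_bigA.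
apply: eq_bigr => a _.
rewrite sum_ind_interval; have := ltn_ord (c a); lia.
Qed.

Lemma kk_le (c : cellidx n m) i j : (kk c i j <= m)%N.
Proof.
rewrite /kk; case: insubP => //= a _ _; have := ltn_ord (c a); lia.
Qed.

Definition ee (c : cellidx n m) (j : 'I_n) : nat := (\sum_(i < n) kk c i j)%N.

Lemma ee_inner (c : cellidx n m) (j : 'I_n) :
  (\sum_(i < n | i < j) (m - kk c i j) = m * j - ee c j)%N.
Proof.
rewrite sumnB; last by move=> i _; exact: kk_le.
have -> : ee c j = (\sum_(i < n | i < j) kk c i j)%N.
  rewrite /ee [RHS]big_mkcond /=; apply: eq_bigr => i _.
  by case: ltnP => // ji; rewrite kk0.
congr (_ - _)%N.
rewrite sum_nat_cond_const card_sum.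
have -> : (\sum_(i < n) (i < j) = \sum_(i < n) ((0 <= i) && (i < j)))%N by [].
rewrite sum_ind_interval; have := ltn_ord j; lia.
Qed.

Lemma coh_sum (c : cellidx n m) :
  (1 <= n)%N -> (forall a, m <= c a)%N -> is_region R c ->
  coh R c = (\sum_(j < n) (m * j - ee c j))%N.
Proof.
move=> hn Hm Hr; rewrite /coh height_sum // -sum1_card big_distrr /= -sumnB; last first.
  by move=> a _; have := ltn_ord (c a); lia.
rewrite muln1.
transitivity (\sum_(a : proot n) (m - kk c (val a).1 (val a).2))%N.
  by apply: eq_bigr => a _; rewrite kkE.
rewrite (sum_proot (fun p => m - kk c p.1 p.2)%N).
rewrite -(pair_big_dep xpredT (fun i j : 'I_n => (i < j)%N) (fun i j : 'I_n => m - kk c i j)%N) /=.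
rewrite (exchange_big_dep xpredT) //=.
by apply: eq_bigr => j _; rewrite -ee_inner.
Qed.

Lemma cmp_real (d : R) (P : nat -> bool) (t t' : nat) :
  0 < d -> (forall s, (1 <= s <= m)%N -> (s%:R < d) = P s /\ d != s%:R) ->
  (t < m)%N -> (t' < m)%N ->
  (t%:R - t'%:R < d) = (if (t <= t')%N then true else P (t - t')%N) /\
  (d < t'%:R - t%:R) = (if (t' <= t)%N then false else ~~ P (t' - t)%N).
Proof.
move=> d0 HP tm tm'; split.
- case: leqP => tt.
    have : (t%:R <= t'%:R :> R) by rewrite ler_nat.
    move=> h; apply/idP; lra.
  have [<- _] := HP (t - t')%N (ltac:(lia)).
  by rewrite natrB //; exact: ltnW.
- case: leqP => tt.
    have : (t'%:R <= t%:R :> R) by rewrite ler_nat.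
    move=> h; apply/idP; lra.
  have [<- hne] := HP (t' - t)%N (ltac:(lia)).
  have e : (t' - t)%:R = t'%:R - t%:R :> R by rewrite natrB // ltnW.
  rewrite e in hne *.
  by rewrite ltNge le_eqVlt negb_or eq_sym hne.
Qed.

Lemma cmp_P (c : cellidx n m) (x : 'I_n -> R) (i i' : 'I_n) :
  (forall a, m <= c a)%N -> in_cell R c x -> (i < i')%N ->
  forall s, (1 <= s <= m)%N ->
  (s%:R < x i' - x i) = (s <= kk c i i')%N /\ x i' - x i != s%:R.
Proof.
move=> Hm Hx ii s hs.
have [a Ha] : exists a : proot n, val a = (i, i') by exists (exist _ (i, i') ii).
have := cell_facts Hx (Hm a) hs; rewrite /rootpair Ha /=.
by rewrite -(kkE c a) Ha.
Qed.

Definition Vx (x : 'I_n -> R) (p : 'I_n * 'I_m) : R := x p.1 + (p.2 : nat).+1%:R.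

Definition cmpE (k : 'I_n -> 'I_n -> nat) (p q : 'I_n * 'I_m) : bool :=
  if (p.1 < q.1)%N then (if (p.2 <= q.2)%N then true else ((p.2 : nat) - q.2 <= k p.1 q.1)%N)
  else if (q.1 < p.1)%N then (if (q.2 <= p.2)%N then false else ~~ ((q.2 : nat) - p.2 <= k q.1 p.1)%N)
  else (p.2 < q.2)%N.

Lemma x_incr (c : cellidx n m) (x : 'I_n -> R) (i i' : 'I_n) :
  (forall a, m <= c a)%N -> in_cell R c x -> (i < i')%N -> x i < x i'.
Proof.
move=> Hm Hx ii.
have [a Ha] : exists a : proot n, val a = (i, i') by exists (exist _ (i, i') ii).
have := pos_cell_gt0 a Hm Hx; rewrite /rootpair Ha /= subr_gt0 //.
Qed.

Lemma Vx_cmp (c : cellidx n m) (x : 'I_n -> R) p q :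
  (forall a, m <= c a)%N -> in_cell R c x ->
  (Vx x p < Vx x q) = cmpE (kk c) p q.
Proof.
move=> Hm Hx; case: p q => [i t] [i' t']; rewrite /Vx /cmpE /=.
have tm := ltn_ord t; have tm' := ltn_ord t'.
rewrite -!natr1.
case: (ltngtP i i') => ii.
- have d0 : 0 < x i' - x i by rewrite subr_gt0; exact: (x_incr Hm Hx ii).
  have [<- _] := cmp_real d0 (cmp_P Hm Hx ii) tm tm'.
  by apply/idP/idP => h; lra.
- have d0 : 0 < x i - x i' by rewrite subr_gt0; exact: (x_incr Hm Hx ii).
  have [_ <-] := cmp_real d0 (cmp_P Hm Hx ii) tm tm'.
  by apply/idP/idP => h; lra.
- have -> : i' = i by apply: val_inj.
  by rewrite !addrA ltrD2r ltrD2l ltr_nat.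
Qed.

Definition Aset (x : 'I_n -> R) (j : 'I_n) : {set 'I_n * 'I_m} :=
  [set p : 'I_n * 'I_m | (p.1 < j)%N && (Vx x p < x j)].

Lemma Aset_row (c : cellidx n m) (x : 'I_n -> R) (i j : 'I_n) :
  (forall a, m <= c a)%N -> in_cell R c x ->
  kk c i j = #|[set t : 'I_m | (i, t) \in Aset x j]|.
Proof.
move=> Hm Hx; case: (ltnP i j) => ij.
  rewrite (kk_card Hm Hx ij); apply: eq_card => t; rewrite !inE /Vx /= ij /=.
  by rewrite ltrBrDl.
rewrite kk0 //; apply/esym/eqP; rewrite cards_eq0; apply/eqP/setP => t.
by rewrite !inE /= ltnNge ij.
Qed.

Lemma ee_card (c : cellidx n m) (x : 'I_n -> R) (j : 'I_n) :
  (forall a, m <= c a)%N -> in_cell R c x -> ee c j = #|Aset x j|.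
Proof.
move=> Hm Hx; rewrite /ee card_sum_in.
transitivity (\sum_(i < n) \sum_(t : 'I_m) ((i, t) \in Aset x j))%N.
  apply: eq_bigr => i _; rewrite (Aset_row i j Hm Hx) card_sum //.
by rewrite (pair_bigA _ (fun (i : 'I_n) (t : 'I_m) => nat_of_bool ((i, t) \in Aset x j))); apply: eq_bigr => -[i t].
Qed.

Lemma pos_inj (c c' : cellidx n m) :
  (forall a, m <= c a)%N -> is_region R c ->
  (forall a, m <= c' a)%N -> is_region R c' ->
  (forall j, ee c j = ee c' j) -> c = c'.
Proof.
move=> Hm [x Hx] Hm' [y Hy] He.
suff Hk : forall k (j : 'I_n), (j < k)%N -> forall i, kk c i j = kk c' i j.
  apply/ffunP => a; apply: ord_inj.
  have := kkE c a; have := kkE c' a; rewrite (Hk n.+1 (val a).2 (ltnW (ltn_ord _))) => ->.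
  move=> h; apply: (subn_inj_helper (Hm a) (Hm' a)); exact: esym.
elim=> [|k IH] j //; rewrite ltnS leq_eqVlt => /orP [/eqP jk|]; last exact: IH.
have Hcmp : forall p q : 'I_n * 'I_m, (p.1 < j)%N -> (q.1 < j)%N ->
    (Vx x p < Vx x q) = (Vx y p < Vx y q).
  move=> p q pj qj; rewrite (Vx_cmp _ _ Hm Hx) (Vx_cmp _ _ Hm' Hy) /cmpE.
  rewrite !IH //; by rewrite -jk.
have HA : Aset x j = Aset y j.
  have key : forall (x y : 'I_n -> R), 
    (forall p q : 'I_n * 'I_m, (p.1 < j)%N -> (q.1 < j)%N ->
      (Vx x p < Vx x q) = (Vx y p < Vx y q)) ->
    ~~ (Aset x j \subset Aset y j) -> Aset y j \subset Aset x j.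
    move=> x0 y0 Hc /subsetPn [p pA pnA]; apply/subsetP => q qA.
    move: pA pnA qA; rewrite !inE => /andP [pj px] /nandP [/negP //|py] /andP [qj qy].
    apply/andP; split => //.
    case: (ltrP (Vx x0 q) (Vx x0 p)) => h; first exact: lt_trans px.
    exfalso; move: h; rewrite leNgt (Hc q p qj pj) => /negP h.
    apply: h; apply: lt_le_trans qy _.
    by rewrite leNgt.
  have cx := ee_card j Hm Hx; have cy := ee_card j Hm' Hy.
  case: (boolP (Aset x j \subset Aset y j)) => sub.
    by apply/eqP; rewrite eqEcard sub /= -cx -cy He.
  have sub' := key x y Hcmp sub.
  by apply/esym/eqP; rewrite eqEcard sub' /= -cx -cy He.
move=> i; rewrite (Aset_row i j Hm Hx) (Aset_row i j Hm' Hy) HA //.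
Qed.
End Geo.

Local Open Scope ring_scope.

Section Gap.
Variables (R : realFieldType) (T : finType) (A : {set T}) (f : T -> R).

Lemma next_above (z : R) : (exists2 p, p \in A & z < f p) ->
  exists q, [/\ q \in A, z < f q & forall p, p \in A -> z < f p -> f q <= f p].
Proof.
move=> [q0 q0A zq0].
have Pq0 : (q0 \in A) && (z < f q0) by rewrite q0A zq0.
case: (arg_minP (P := fun p => (p \in A) && (z < f p)) f Pq0) => q /andP [qA zq] Hmin.
by exists q; split => // p pA zp; apply: Hmin; rewrite pA zp.
Qed.

Definition below (y : R) := [set p in A | f p < y].

Lemma step_le (z : R) :
  exists y, [/\ z < y, (forall p, p \in A -> f p != y) &
                   forall p, p \in A -> (f p < y) = (f p <= z)].
Proof.
case: (boolP [exists p, (p \in A) && (z < f p)]).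
- move/existsP => [p0 /andP [p0A zp0]].
  have [q [qA zq Hq]] := next_above (ex_intro2 _ _ p0 p0A zp0).
  exists ((z + f q) / 2); have := midf_lt zq => -[h1 h2]; split.
  + by [].
  + move=> p pA; apply/negP => /eqP e.
    have zp : z < f p by rewrite e.
    have := Hq p pA zp; rewrite e; lra.
  + move=> p pA; apply/idP/idP => h; last by lra.
    case: (ltrP z (f p)) => h'; last by [].
    have := Hq p pA h'; lra.
- rewrite negb_exists => /forallP Hn.
  exists (z + 1); split; first by lra.
  + move=> p pA; have := Hn p; rewrite pA /= -leNgt => h.
    apply/negP => /eqP e; move: h; rewrite e; lra.
  + move=> p pA; have := Hn p; rewrite pA /= -leNgt => h.
    apply/idP/idP => _; lra.
Qed.

Lemma gap (L : R) : {in A &, injective f} -> (forall p, p \in A -> f p != L) ->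
  forall d, (#|below L| + d <= #|A|)%N ->
  exists y, [/\ L < y, (forall p, p \in A -> f p != y) & #|below y| = (#|below L| + d)%N].
Proof.
move=> Hinj HL; elim=> [|d IH] Hd.
  have [y [Ly Hy Hb]] := step_le L.
  exists y; split => //; rewrite addn0.
  have -> : below y = below L.
    apply/setP => p; rewrite !inE.
    case pA: (p \in A) => //=; rewrite Hb // le_eqVlt (negbTE (HL p pA)) //.
  by [].
have [y [Ly Hy Hb]] := IH (ltac:(lia)).
have [p0 p0A yp0] : exists2 p, p \in A & y < f p.
  case: (boolP [exists p, (p \in A) && (y < f p)]).
    by move/existsP => [p /andP [pA yp]]; exists p.
  rewrite negb_exists => /forallP Hn.
  have : below y = A.
    apply/setP => p; rewrite !inE; case pA: (p \in A) => //=.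
    have := Hn p; rewrite pA /= -leNgt le_eqVlt (negbTE (Hy p pA)) //.
  move=> e; move: Hd; rewrite -e Hb; lia.
have [q [qA yq Hq]] := next_above (ex_intro2 _ _ p0 p0A yp0).
have [y' [qy' Hy' Hb']] := step_le (f q).
exists y'; split.
- apply: lt_trans Ly _; apply: lt_trans yq _; exact: qy'.
- exact: Hy'.
- have -> : below y' = q |: below y.
    apply/setP => p; rewrite !inE; case pA: (p \in A); rewrite /= ?orbF.
    + rewrite Hb' //; apply/idP/idP.
      * move=> h; case: (ltrP (f p) y) => h'; first by rewrite orbT.
        have yp : y < f p by rewrite lt_neqAle h' andbT eq_sym Hy.
        have := Hq p pA yp => h2.
        have e : f p = f q by apply/eqP; rewrite eq_le h h2.
        by rewrite (Hinj p q pA qA e) eqxx.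
      * case/orP => [/eqP -> //|h]; apply/ltW; exact: lt_trans h yq.
    + case: eqP => // e; by move: pA; rewrite e qA.
  rewrite cardsU1 Hb inE qA /= ltNge (ltW yq) /=; lia.
Qed.

End Gap.

Lemma card_row_lt n m k : (k <= n)%N ->
  #|[set p : 'I_n * 'I_m | (p.1 < k)%N]| = (k * m)%N.
Proof.
move=> kn; rewrite card_sum_in.
have -> : (\sum_(x : 'I_n * 'I_m) (x \in [set p : 'I_n * 'I_m | (p.1 < k)%N]) =
   \sum_(i < n) \sum_(t < m) ((i, t) \in [set p : 'I_n * 'I_m | (p.1 < k)%N]))%N.
  by rewrite (pair_bigA _ (fun (i : 'I_n) (t : 'I_m) => nat_of_bool ((i, t) \in [set p : 'I_n * 'I_m | (p.1 < k)%N]))); apply: eq_bigr => -[i t].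
under eq_bigr => i _ do under eq_bigr => t _ do rewrite inE /=.
under eq_bigr => i _ do rewrite sum_nat_const card_ord.
rewrite -big_distrr /=.
have -> : (\sum_(i < n) (i < k)%N = \sum_(i < n) ((0 <= i) && (i < k)))%N by [].
by rewrite sum_ind_interval subn0 (minn_idPl kn) mulnC.
Qed.

Section Construct.
Variables (R : realFieldType) (n m : nat).
Hypothesis hm : (1 <= m)%N.
Variable E : nat -> nat.
Hypothesis HE : forall i j, (i <= j)%N -> (j < n)%N -> (E i <= E j)%N.
Hypothesis HEb : forall i, (i < n)%N -> (E i <= m * i)%N.

Definition Sx (x : nat -> R) (j : nat) : {set 'I_n * 'I_m} :=
  [set p : 'I_n * 'I_m | (p.1 < j)%N && (x p.1 + (p.2 : nat).+1%:R < x j)].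

Definition good (x : nat -> R) (k : nat) :=
  (forall i i', (i < i' < k)%N -> x i < x i' /\
     forall s, (1 <= s <= m)%N -> x i' - x i != s%:R) /\
  (forall j, (j < k)%N -> #|Sx x j| = E j).

Lemma build k : (k <= n)%N -> exists x, good x k.
Proof.
elim: k => [|k IH] kn.
  by exists (fun _ => 0); split => [i i'|j]; rewrite ?ltn0 ?andbF.
have [x [G1 G2]] := IH (ltnW kn).
pose A := [set p : 'I_n * 'I_m | (p.1 < k)%N].
pose f := fun p : 'I_n * 'I_m => x p.1 + (p.2 : nat).+1%:R.
pose L := if k is k'.+1 then x k' else 0.
have Hinj : {in A &, injective f}.
  move=> [i t] [i' t']; rewrite !inE /f /= => ik i'k e.
  have tm := ltn_ord t; have tm' := ltn_ord t'.
  case: (ltngtP i i') => ii.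
  - have [lt Hs] := G1 i i' (ltac:(lia)).
    exfalso; case: (leqP t t') => tt.
      have : (t%:R <= t'%:R :> R) by rewrite ler_nat.
      move: e; rewrite -!natr1; lra.
    have := Hs (t - t')%N (ltac:(lia)); rewrite natrB ?(ltnW tt) //.
    move: e; rewrite -!natr1 => e; apply/negP; rewrite negbK; apply/eqP; lra.
  - have [lt Hs] := G1 i' i (ltac:(lia)).
    exfalso; case: (leqP t' t) => tt.
      have : (t'%:R <= t%:R :> R) by rewrite ler_nat.
      move: e; rewrite -!natr1; lra.
    have := Hs (t' - t)%N (ltac:(lia)); rewrite natrB ?(ltnW tt) //.
    move: e; rewrite -!natr1 => e; apply/negP; rewrite negbK; apply/eqP; lra.
  - have ei : i = i' by apply: ord_inj.
    subst i'; move/addrI/eqP: e; rewrite eqr_nat eqSS => /eqP et.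
    by rewrite (ord_inj et).
have HL : forall p, p \in A -> f p != L.
  move=> [i t]; rewrite inE /f /L /=; case Ek : k => [|k'] //; rewrite -Ek => ik.
  case: (ltnP i k') => ik'.
    have [_ Hs] := G1 i k' (ltac:(lia)).
    have := Hs t.+1 (ltac:(have := ltn_ord t; lia)).
    apply: contra => /eqP e; apply/eqP; rewrite -e; lra.
  have -> : (i : nat) = k' by lia.
  apply/negP => /eqP e; have : (0 < (t : nat).+1%:R :> R) by rewrite ltr0n.
  lra.
have HbL : #|below A f L| = (if k is k'.+1 then E k' else 0%N).
  case Ek : k => [|k'].
    apply/eqP; rewrite cards_eq0; apply/eqP/setP => p; rewrite !inE.
    by rewrite Ek ltn0.
  rewrite -(G2 k') ?Ek //; apply: eq_card => -[i t]; rewrite !inE /L /f /= Ek.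
  case: (ltnP i k') => ik'; first by rewrite ltnS (ltnW ik').
  case: (ltnP i k'.+1) => ik //=.
  have -> : (i : nat) = k' by lia.
  apply/negP; have : (0 < (t : nat).+1%:R :> R) by rewrite ltr0n.
  move=> h h'; move: h'; lra.
have cA : #|A| = (k * m)%N by rewrite card_row_lt // ltnW.
have Hd : (#|below A f L| + (E k - #|below A f L|) <= #|A|)%N.
  rewrite HbL cA; have := HEb kn.
  case Ek : k => [|k']; first by lia.
  have := @HE k' k'.+1 (leqnSn _); rewrite -Ek => h1 h2; have := h1 kn; lia.
have [y [Ly Hy Hb]] := gap Hinj HL Hd.
have HbE : #|below A f y| = E k.
  rewrite Hb HbL; case Ek : k => [|k']; first by lia.
  have := @HE k' k'.+1 (leqnSn _); rewrite -Ek => h1; have := h1 kn; lia.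
exists (fun i => if i == k then y else x i); split.
- move=> i i' /andP [ii']; rewrite ltnS leq_eqVlt => /orP [/eqP i'k|i'k].
    subst i'; rewrite eqxx (ltn_eqF ii').
    split.
      apply: le_lt_trans Ly; rewrite /L; case Ek : k ii' => [|k'] // ik.
      case: (ltnP i k') => ik'.
        by apply: ltW; have [+ _] := G1 i k' (ltac:(lia)).
      by have -> : i = k' by lia.
    move=> s /andP [s1 sm]; apply/negP => /eqP e.
    have H1 : (i < n)%N by apply: ltn_trans ii' kn.
    have H2 : (s.-1 < m)%N by lia.
    have hp : (Ordinal H1, Ordinal H2) \in A by rewrite inE /=.
    have := Hy _ hp; rewrite /f /=.
    rewrite prednK //; apply/negP; rewrite negbK; apply/eqP; lra.
  have ik : (i == k) = false by rewrite ltn_eqF // (ltn_trans ii').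
  rewrite ik (ltn_eqF i'k).
  by apply: G1; rewrite ii'.
- move=> j; rewrite ltnS leq_eqVlt => /orP [/eqP jk|jk].
    subst j; rewrite -HbE; apply: eq_card => -[i t]; rewrite !inE /= eqxx.
    case: (ltnP i k) => ik //=; by rewrite (ltn_eqF ik).
  rewrite -(G2 j jk); apply: eq_card => -[i t]; rewrite !inE /= (ltn_eqF jk).
  case: (ltnP i j) => ij //=; by rewrite (ltn_eqF (ltn_trans ij jk)).
Qed.

End Construct.
Local Open Scope ring_scope.

Lemma card_ord_lt M u : #|[set t' : 'I_M | (t' < u)%N]| = minn u M.
Proof.
rewrite card_sum.
have -> : (\sum_(t' : 'I_M) (t' < u)%N = \sum_(t' < M) ((0 <= t') && (t' < u)))%N by [].
by rewrite sum_ind_interval subn0.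
Qed.

Lemma downset_card M (P : pred 'I_M) :
  (forall t t' : 'I_M, (t' <= t)%N -> P t -> P t') ->
  forall t : 'I_M, P t = (t < #|[set t | P t]|)%N.
Proof.
move=> Hd t; apply/idP/idP => Pt.
- have sub : [set t' : 'I_M | (t' <= t)%N] \subset [set t | P t].
    by apply/subsetP => t'; rewrite !inE => h; apply: Hd Pt.
  have := subset_leq_card sub; rewrite (card_ord_lt M t.+1); have := ltn_ord t; lia.
- apply: contraTT Pt => nPt.
  have sub : [set t | P t] \subset [set t' : 'I_M | (t' < t)%N].
    apply/subsetP => t'; rewrite !inE => Pt'; rewrite ltnNge; apply/negP => h.
    by move/negP: nPt; apply; apply: Hd Pt'.
  have := subset_leq_card sub; rewrite (card_ord_lt M t) -leqNgt; have := ltn_ord t; lia.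
Qed.

Section Realize.
Variables (R : realFieldType) (n m : nat).
Hypothesis hm : (1 <= m)%N.
Hypothesis hn : (1 <= n)%N.

Lemma interval_of (v : R) :
  0 < v -> (forall s, (1 <= s <= m)%N -> v != s%:R) ->
  (#|[set t : 'I_m | ((t : nat).+1%:R < v)%R]| <= m)%N /\
  in_interval (inord (m + #|[set t : 'I_m | ((t : nat).+1%:R < v)%R]|) : 'I_(m.*2.+1)) v.
Proof.
move=> v0 Hv.
set S := [set t : 'I_m | ((t : nat).+1%:R < v)%R].
have kS : (#|S| <= m)%N by have := max_card (mem S); rewrite card_ord.
have Hd : forall t : 'I_m, (t \in S) = (t < #|S|)%N.
  move=> t; rewrite {1}/S inE (downset_card (P := fun t : 'I_m => (t : nat).+1%:R < v)).
    by [].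
  move=> a b ba; apply: le_lt_trans; rewrite ler_nat; lia.
split => //; rewrite /in_interval inordK; last lia.
split.
- right; rewrite natrD addrAC subrr add0r.
  case k0 : #|S| => [|k]; first by rewrite v0.
  have kl : (k < m)%N by lia.
  have := Hd (Ordinal kl); rewrite k0 ltnSn inE /= => /esym //.
- case: (ltnP #|S| m) => km; last by left; rewrite -addnn; lia.
  right.
  have := Hd (Ordinal km); rewrite ltnn inE /= => /negbT; rewrite -leNgt => h.
  have hne := Hv #|S|.+1 (ltac:(lia)).
  have h2 : v < #|S|.+1%:R by rewrite lt_neqAle hne h.
  rewrite -addnS natrD; lra.
Qed.


Lemma realize (E : nat -> nat) :
  (forall i j, (i <= j)%N -> (j < n)%N -> (E i <= E j)%N) ->
  (forall i, (i < n)%N -> (E i <= m * i)%N) ->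
  exists c : cellidx n m, [/\ (forall a, m <= c a)%N, is_region R c &
     forall j : 'I_n, ee c j = E j].
Proof.
move=> HE HEb.
have [x [G1 G2]] := build R hm HE HEb (leqnn n).
pose pt := center (fun i : 'I_n => x i).
pose c : cellidx n m := [ffun a : proot n =>
  inord (m + #|[set t : 'I_m | ((t : nat).+1%:R < x (val a).2 - x (val a).1)%R]|)].
have Hv : forall a : proot n, 0 < x (val a).2 - x (val a).1 /\
    forall s, (1 <= s <= m)%N -> x (val a).2 - x (val a).1 != s%:R.
  move=> a; have := valP a; case: (val a) => i j /= ij.
  have [h1 h2] := G1 i j (ltac:(have := ltn_ord j; lia)).
  by split => //; rewrite subr_gt0.
have Hcell : in_cell R c pt.
  split; first exact: center_inV.
  move=> a; rewrite center_rp /rootpair ffunE.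
  have [h1 h2] := Hv a.
  by have [_ h] := interval_of h1 h2.
have Hm : forall a, (m <= c a)%N.
  move=> a; rewrite ffunE; have [h1 h2] := Hv a.
  have [k _] := interval_of h1 h2; rewrite inordK; lia.
exists c; split => //; first by exists pt.
move=> j; rewrite (ee_card hm j Hm Hcell) -(G2 j (ltn_ord j)).
apply: eq_card => -[i t]; rewrite !inE /Vx /pt /center /=.
case: (i < j)%N => //=; apply/idP/idP => h; lra.
Qed.

End Realize.

Section Main.
Variables (R : realFieldType) (n m : nat).
Hypothesis hm : (1 <= m)%N.
Hypothesis hn : (1 <= n)%N.

Lemma ee_mono (c : cellidx n m) : (forall a, m <= c a)%N -> is_region R c ->
  forall i j : 'I_n, (i <= j)%N -> (ee c i <= ee c j)%N.
Proof.
move=> Hm [x Hx] i j ij; rewrite (ee_card hm i Hm Hx) (ee_card hm j Hm Hx).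
apply: subset_leq_card; apply/subsetP => -[p t]; rewrite !inE /= => /andP [pi h].
rewrite (leq_trans pi ij) /=; apply: lt_le_trans h _.
move: ij; rewrite leq_eqVlt => /orP [/eqP e|ij].
  by rewrite (ord_inj e).
by apply: ltW; exact: (x_incr hm Hm Hx ij).
Qed.

Lemma ee_bound (c : cellidx n m) : (forall a, m <= c a)%N -> is_region R c ->
  forall j : 'I_n, (ee c j <= m * j)%N.
Proof.
move=> Hm [x Hx] j; rewrite (ee_card hm j Hm Hx) mulnC -(card_row_lt m (ltnW (ltn_ord j))).
apply: subset_leq_card; apply/subsetP => -[p t]; rewrite !inE /= => /andP [-> _] //.
Qed.

Definition Ec (c : cellidx n m) (b : nat) : nat := oapp (ee c) 0%N (insub b).

Lemma EcE (c : cellidx n m) (j : 'I_n) : Ec c j = ee c j.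
Proof. by rewrite /Ec valK. Qed.

Definition Phi (c : cellidx n m) : (m * n + n).-tuple bool :=
  insubd (nseq_tuple (m * n + n) false) (wordE (Ec c) 0 n (m * n)).

Lemma Ec_props (c : cellidx n m) : (forall a, m <= c a)%N -> is_region R c ->
  (forall i j, (i <= j)%N -> (j < n)%N -> (Ec c i <= Ec c j)%N) /\
  (forall i, (i < n)%N -> (Ec c i <= m * i)%N).
Proof.
move=> Hm Hr; split.
- move=> i j ij jn; have iN : (i < n)%N by apply: leq_ltn_trans jn.
  have -> : i = Ordinal iN by []. have -> : j = Ordinal jn by [].
  by rewrite !EcE; apply: ee_mono.
- move=> i iN; have -> : i = Ordinal iN by [].
  by rewrite EcE; apply: ee_bound.
Qed.

Lemma Phi_val (c : cellidx n m) : (forall a, m <= c a)%N -> is_region R c ->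
  val (Phi c) = wordE (Ec c) 0 n (m * n).
Proof.
move=> Hm Hr; have [H1 H2] := Ec_props Hm Hr.
rewrite /Phi insubdK // unfold_in size_wordE ?subn0 //.
apply: monoE_intro => // i iN; apply: leq_trans (H2 i iN) _.
by rewrite leq_mul2l ltnW ?orbT.
Qed.


Lemma Phi_props (c : cellidx n m) : (forall a, m <= c a)%N -> is_region R c ->
  dyckb m n (Phi c) /\ forall b, (b < n)%N -> east_before (Phi c) b = Ec c b.
Proof.
move=> Hm Hr; have [H1 H2] := Ec_props Hm Hr.
have HM : monoE (Ec c) 0 n (m * n).
  apply: monoE_intro => // i iN; apply: leq_trans (H2 i iN) _.
  by rewrite leq_mul2l ltnW ?orbT.
rewrite (Phi_val Hm Hr); split; first exact: dyck_wordE.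
by move=> b bn; rewrite (eb_wordE HM bn) subn0.
Qed.

Lemma coh_area (c : cellidx n m) : (forall a, m <= c a)%N -> is_region R c ->
  coh R c = area m n (Phi c).
Proof.
move=> Hm Hr; have [Hd Heb] := Phi_props Hm Hr.
have [H1 H2] := Ec_props Hm Hr.
rewrite (coh_sum hm hn Hm Hr) area_eb; last first.
  by move=> i iN; rewrite Heb //; apply: H2.
by apply: eq_bigr => b _; rewrite Heb // EcE.
Qed.

Lemma Phi_inj (c c' : cellidx n m) :
  (forall a, m <= c a)%N -> is_region R c ->
  (forall a, m <= c' a)%N -> is_region R c' -> Phi c = Phi c' -> c = c'.
Proof.
move=> Hm Hr Hm' Hr' e.
apply: (pos_inj hm Hm Hr Hm' Hr') => j.
have [_ h] := Phi_props Hm Hr; have [_ h'] := Phi_props Hm' Hr'.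
by rewrite -!EcE -h // -h' // e.
Qed.

End Main.

Unset Implicit Arguments.

Theorem proposition3p10 (R : realFieldType) (n m : nat) (hn : (1 <= n)%N) (hm : (1 <= m)%N) :
  \sum_(c : cellidx n m | propb (is_pos_region R c)) 'X^(coh R c)
  = \sum_(D : (m * n + n).-tuple bool | dyckb m n D) 'X^(area m n D) :> {poly int}.
Proof.
pose S := [set c : cellidx n m | propb (is_pos_region R c)].
have posP : forall c, c \in S -> (forall a, m <= c a)%N /\ is_region R c.
  by move=> c; rewrite inE => /propbP /(pos_iff _ hm) [].
transitivity (\sum_(c in S) 'X^(area m n (Phi c)) : {poly int}).
  apply: eq_big => [c|c]; first by rewrite inE.
  move=> h; have [Hm Hr] : (forall a, m <= c a)%N /\ is_region R c by apply: posP; rewrite inE.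
  by rewrite (coh_area hm hn Hm Hr).
have Hinj : {in S &, injective (@Phi n m)}.
  move=> c c' cS c'S; have [Hm Hr] := posP c cS; have [Hm' Hr'] := posP c' c'S.
  exact: (Phi_inj hm Hm Hr Hm' Hr').
rewrite -(big_imset (fun D : (m * n + n).-tuple bool => 'X^(area m n D) : {poly int}) Hinj).
apply: eq_bigl => D; apply/imsetP/idP.
- move=> [c cS ->]; have [Hm Hr] := posP c cS.
  by have [] := Phi_props hm Hm Hr.
- move=> HD; have [Hmo Hb Hw] := dyck_profile HD.
  have [c [Hm Hr He]] := realize R hm hn (E := east_before D)
    (fun i j ij _ => Hmo i j ij) Hb.
  exists c.
    by rewrite inE; apply/propbP/(pos_iff _ hm).
  apply: val_inj; rewrite (Phi_val hm Hm Hr); transitivity (wordE (east_before D) 0 n (m * n)); first by rewrite Hw.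
  apply: eq_wordE => i iN; have -> : i = Ordinal iN by [].
  by rewrite EcE He.
Qed.
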